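(* On the uniform one-dimensional grid of spacing $h$, consider the finite difference operator \[ -F^{1D,e}[u]=A^+\left(\lvert u_x^h\rvert^+,-u_{xx}^h\right)+A^-\left(-\lvert u_x^h\rvert^-,-u_{xx}^h\right). \] Then $-F^{1D,e}$ is elliptic and consistent with $-F^{1D}$, where $F^{1D}[u]=A(u_x,u_{xx})=(u_x^2u_{xx})^{1/3}$.
   Context: $A(p,q)=(p^2q)^{1/3}$ (real cube root), $x^+=\max(x,0)$, $x^-=\min(x,0)$, $A^+(p,q)=A(p^+,q^+)$, $A^-(p,q)=A(p^-,q^-)$. For a grid function $u$: $D^-_xu(x)=\frac{u(x)-u(x-h)}h$, $-D^+_xu(x)=\frac{u(x)-u(x+h)}h$, $\lvert u_x^h\rvert^+=\max\{-D^+_xu,D^-_xu,0\}$, $-\lvert u_x^h\rvert^-=\min\{-D^+_xu,D^-_xu,0\}$, and $u_{xx}^h(x)=\frac{u(x+h)-2u(x)+u(x-h)}{h^2}$. A finite difference operator has the form $F^h[u](x)=F^h(x,u(x),u(x)-u(\cdot))$ (depending on $u(x)$ and the differences $u(x)-u(y)$ for grid points $y$); it is elliptic if $r\le s$ and $v(\cdot)\le w(\cdot)$ imply $F^h(x,r,v(\cdot))\le F^h(x,s,w(\cdot))$. It is consistent with an operator $F$ if for every smooth $\phi$ and every $x$, $\lim_{h\to0,\,y\to x}F^h[\phi](y)=F[\phi](x)$. *)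

(* Defs.v *)
From Stdlib Require Import Reals ZArith.
From Coquelicot Require Import Coquelicot.
Open Scope R_scope.

Definition cbrt (x : R) : R :=
  if Rlt_dec 0 x then Rpower x (1/3)
  else if Rlt_dec x 0 then - Rpower (- x) (1/3)
  else 0.

Definition A (p q : R) : R := cbrt (p ^ 2 * q).
Definition Aplus (p q : R) : R := A (Rmax p 0) (Rmax q 0).
Definition Aminus (p q : R) : R := A (Rmin p 0) (Rmin q 0).

(* A finite difference operator on a uniform 1D grid of spacing h:
   Fh h x r v  stands for  F^h(x, r, v(.)),  where r = u(x) and
   v y = u(x) - u(y) for grid points y. *)
Definition fd_operator := R -> R -> R -> (R -> R) -> R.

Definition apply_fd (Fh : fd_operator) (h : R) (u : R -> R) (x : R) : R :=
  Fh h x (u x) (fun y => u x - u y).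

Definition elliptic (Fh : fd_operator) : Prop :=
  forall (h x r s : R) (v w : R -> R), 0 < h -> r <= s ->
    (forall k : Z, v (x + IZR k * h) <= w (x + IZR k * h)) ->
    Fh h x r v <= Fh h x s w.

Definition smooth (f : R -> R) : Prop := forall (n : nat) (x : R), ex_derive_n f n x.

Definition consistent (Fh : fd_operator) (F : (R -> R) -> R -> R) : Prop :=
  forall (phi : R -> R), smooth phi -> forall x : R,
    forall eps : R, 0 < eps -> exists delta : R, 0 < delta /\
      forall h y : R, 0 < h -> h < delta -> Rabs (y - x) < delta ->
        Rabs (apply_fd Fh h phi y - F phi x) < eps.

(* The scheme -F^{1D,e}, written in terms of the differences v y = u(x)-u(y):
   -D^+_x u = v(x+h)/h,  D^-_x u = v(x-h)/h,
   -u_xx^h = (v(x+h) + v(x-h))/h^2,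
   |u_x^h|^+ = max{-D^+u, D^-u, 0},  -|u_x^h|^- = min{-D^+u, D^-u, 0}. *)
Definition minus_F1De : fd_operator :=
  fun h x _ v =>
    let mDp := v (x + h) / h in
    let Dm := v (x - h) / h in
    let muxx := (v (x + h) + v (x - h)) / (h * h) in
    Aplus (Rmax (Rmax mDp Dm) 0) muxx + Aminus (Rmin (Rmin mDp Dm) 0) muxx.

Definition minus_F1D (u : R -> R) (x : R) : R :=
  - A (Derive u x) (Derive_n u 2 x).

(* Main.v *)
Require Import Defs.
From Stdlib Require Import Reals.
From Coquelicot Require Import Coquelicot.
From Stdlib Require Import Lra Psatz.
Open Scope R_scope.

Lemma rpow3 (x : R) : 0 < x -> Rpower x (1/3) ^ 3 = x.
Proof.
  intros Hx. rewrite <- Rpower_pow by (unfold Rpower; apply exp_pos).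
  rewrite Rpower_mult. replace (1/3 * INR 3) with 1 by (simpl; field).
  apply Rpower_1; auto.
Qed.

Lemma cbrt_cube (x : R) : cbrt x ^ 3 = x.
Proof.
  unfold cbrt. destruct (Rlt_dec 0 x).
  - apply rpow3; auto.
  - destruct (Rlt_dec x 0).
    + replace ((- Rpower (- x) (1 / 3)) ^ 3) with (- (Rpower (- x) (1/3) ^ 3)) by ring.
      rewrite rpow3 by lra. ring.
    + simpl. lra.
Qed.

Lemma cube_le (s t : R) : s ^ 3 <= t ^ 3 -> s <= t.
Proof.
  intros H. destruct (Rle_dec s t); auto. exfalso.
  assert (t < s) by lra.
  assert (s^3 - t^3 = (s - t) * (s*s + s*t + t*t)) by ring.
  assert (s*s + s*t + t*t > 0).
  { assert (s*s + s*t + t*t = (s + t/2)^2 + 3/4 * t^2) by field.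
    destruct (Req_dec t 0).
    - subst. nra.
    - assert (0 < t*t) by (apply Rsqr_pos_lt; auto). pose proof (pow2_ge_0 (s+t/2)). nra. }
  nra.
Qed.

Lemma cbrt_le (a b : R) : a <= b -> cbrt a <= cbrt b.
Proof. intros H. apply cube_le. rewrite !cbrt_cube. auto. Qed.

Lemma cbrt_unique (s x : R) : s ^ 3 = x -> cbrt x = s.
Proof.
  intros H. apply Rle_antisym; apply cube_le; rewrite cbrt_cube; lra.
Qed.

Lemma cbrt_opp (x : R) : cbrt (- x) = - cbrt x.
Proof.
  apply cbrt_unique. replace ((- cbrt x)^3) with (- (cbrt x ^3)) by ring.
  rewrite cbrt_cube; auto.
Qed.

Lemma cbrt_0 : cbrt 0 = 0.
Proof. apply cbrt_unique. ring. Qed.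

Lemma cbrt_cont (a b e : R) : 0 < e -> Rabs (a - b) < e ^ 3 / 4 ->
  Rabs (cbrt a - cbrt b) < e.
Proof.
  intros He H.
  pose proof (cbrt_cube a) as Ha. pose proof (cbrt_cube b) as Hb.
  set (s := cbrt a) in *. set (t := cbrt b) in *.
  destruct (Rlt_dec (Rabs (s - t)) e) as [|Hn]; auto. exfalso.
  assert (Hge : e <= Rabs (s - t)) by lra.
  assert (E : a - b = (s - t) * (s*s + s*t + t*t)) by (rewrite <- Ha, <- Hb; ring).
  assert (Q : 4 * (s*s + s*t + t*t) >= (s - t)^2) by (pose proof (pow2_ge_0 (s+t)); nra).
  assert (Q0 : s*s + s*t + t*t >= 0) by (pose proof (pow2_ge_0 (s+t/2)); pose proof (pow2_ge_0 t); assert (s*s + s*t + t*t = (s + t/2)^2 + 3/4 * t^2) by field; nra).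
  rewrite E, Rabs_mult, (Rabs_pos_eq (s*s+s*t+t*t)) in H by lra.
  assert (Rabs (s - t) ^ 2 = (s - t)^2) by apply pow2_abs.
  assert (e^3 <= Rabs (s-t) ^ 3).
  { apply pow_incr. lra. }
  assert (0 <= Rabs (s - t)) by apply Rabs_pos.
  nra.
Qed.

Lemma prod_cont (u0 v0 e : R) : 0 < e -> exists d, 0 < d /\
  forall u v, Rabs (u - u0) < d -> Rabs (v - v0) < d ->
  Rabs (u ^ 2 * v - u0 ^ 2 * v0) < e.
Proof.
  intros He.
  set (K := (2 * Rabs u0 + 1) * (Rabs v0 + 1) + u0 ^ 2).
  assert (HK : 0 <= K).
  { unfold K. pose proof (Rabs_pos u0). pose proof (Rabs_pos v0). pose proof (pow2_ge_0 u0). nra. }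
  exists (Rmin 1 (e / (K + 1))). split.
  { apply Rmin_glb_lt; [lra|]. apply Rdiv_lt_0_compat; lra. }
  intros u v Hu Hv.
  set (d := Rmin 1 (e / (K + 1))) in *.
  assert (Hd1 : d <= 1) by apply Rmin_l.
  assert (Hd2 : d <= e / (K + 1)) by apply Rmin_r.
  assert (HdK : d * K < e).
  { assert (d * (K + 1) <= e).
    { apply (Rmult_le_compat_r (K+1)) in Hd2; [|lra].
      unfold Rdiv in Hd2. rewrite Rmult_assoc, Rinv_l in Hd2 by lra. lra. }
    assert (0 < d) by (pose proof (Rabs_pos (u - u0)); lra). nra. }
  replace (u ^ 2 * v - u0 ^ 2 * v0) with ((u - u0) * ((u + u0) * v) + u0 ^ 2 * (v - v0)) by ring.
  eapply Rle_lt_trans; [apply Rabs_triang|].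
  rewrite !Rabs_mult.
  assert (A1 : Rabs (u + u0) <= 2 * Rabs u0 + 1).
  { replace (u + u0) with ((u - u0) + 2 * u0) by ring.
    eapply Rle_trans; [apply Rabs_triang|]. rewrite Rabs_mult, (Rabs_pos_eq 2) by lra. lra. }
  assert (A2 : Rabs v <= Rabs v0 + 1).
  { replace v with ((v - v0) + v0) by ring.
    eapply Rle_trans; [apply Rabs_triang|]. lra. }
  rewrite (Rabs_pos_eq (u0 ^ 2)) by apply pow2_ge_0.
  pose proof (Rabs_pos (u - u0)). pose proof (Rabs_pos (u + u0)).
  pose proof (Rabs_pos v). pose proof (Rabs_pos (v - v0)). pose proof (pow2_ge_0 u0).
  pose proof (Rabs_pos u0). pose proof (Rabs_pos v0).
  assert (Rabs (u + u0) * Rabs v <= (2 * Rabs u0 + 1) * (Rabs v0 + 1)) by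
    (apply Rmult_le_compat; auto).
  assert (Rabs (u - u0) * (Rabs (u + u0) * Rabs v) <= d * ((2 * Rabs u0 + 1) * (Rabs v0 + 1))).
  { apply Rmult_le_compat; try lra. apply Rmult_le_pos; auto. }
  assert (u0 ^ 2 * Rabs (v - v0) <= u0 ^ 2 * d) by (apply Rmult_le_compat_l; lra).
  unfold K in HdK. nra.
Qed.

Ltac rabs_lip :=
  repeat match goal with
  | H : Rabs _ < _ |- _ => apply Rabs_def2 in H; destruct H
  end;
  unfold Rmax, Rmin; repeat destruct Rle_dec; apply Rabs_def1; lra.

Definition G (a b c : R) : R :=
  Aplus (Rmax (Rmax a b) 0) c + Aminus (Rmin (Rmin a b) 0) c.

Lemma prod_mono_p P1 P2 Q1 Q2 : 0 <= P1 <= P2 -> 0 <= Q1 <= Q2 -> P1^2*Q1 <= P2^2*Q2.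
Proof.
  intros. assert (P1^2 <= P2^2) by (apply pow_incr; lra).
  pose proof (pow2_ge_0 P1). nra.
Qed.

Lemma prod_mono_n P1 P2 Q1 Q2 : P1 <= P2 <= 0 -> Q1 <= Q2 <= 0 -> P1^2*Q1 <= P2^2*Q2.
Proof.
  intros. assert (P2^2 <= P1^2) by nra.
  pose proof (pow2_ge_0 P2). nra.
Qed.

Lemma G_mono a1 a2 b1 b2 c1 c2 : a1 <= a2 -> b1 <= b2 -> c1 <= c2 ->
  G a1 b1 c1 <= G a2 b2 c2.
Proof.
  intros Ha Hb Hc. unfold G, Aplus, Aminus, A.
  apply Rplus_le_compat; apply cbrt_le.
  - apply prod_mono_p; unfold Rmax; repeat destruct Rle_dec; lra.
  - apply prod_mono_n; unfold Rmin; repeat destruct Rle_dec; lra.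
Qed.

Lemma G_cont a0 b0 c0 eps : 0 < eps -> exists d, 0 < d /\
  forall a b c, Rabs (a - a0) < d -> Rabs (b - b0) < d -> Rabs (c - c0) < d ->
  Rabs (G a b c - G a0 b0 c0) < eps.
Proof.
  intros He.
  set (e' := (eps/2)^3/4).
  assert (He' : 0 < e') by (unfold e'; apply Rdiv_lt_0_compat; [apply pow_lt|]; lra).
  destruct (prod_cont (Rmax (Rmax (Rmax a0 b0) 0) 0) (Rmax c0 0) e' He') as [d1 [Hd1 H1]].
  destruct (prod_cont (Rmin (Rmin (Rmin a0 b0) 0) 0) (Rmin c0 0) e' He') as [d2 [Hd2 H2]].
  exists (Rmin d1 d2). split; [apply Rmin_glb_lt; auto|].
  intros a b c Ha Hb Hc.
  assert (Rmin d1 d2 <= d1) by apply Rmin_l.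
  assert (Rmin d1 d2 <= d2) by apply Rmin_r.
  unfold G, Aplus, Aminus, A.
  match goal with |- Rabs (cbrt ?x + cbrt ?y - (cbrt ?z + cbrt ?w)) < _ =>
    replace (cbrt x + cbrt y - (cbrt z + cbrt w)) with ((cbrt x - cbrt z) + (cbrt y - cbrt w)) by ring end.
  eapply Rle_lt_trans; [apply Rabs_triang|].
  replace eps with (eps/2 + eps/2) by field.
  apply Rplus_lt_compat; apply cbrt_cont; try lra; fold e'.
  - apply H1.
    + rabs_lip.
    + rabs_lip.
  - apply H2.
    + rabs_lip.
    + rabs_lip.
Qed.

Lemma G_limit p q : G (- p) p (- q) = - A p q.
Proof.
  unfold G, Aplus, Aminus, A.
  assert (E1 : Rmax (Rmax (Rmax (- p) p) 0) 0 ^ 2 = p ^ 2) by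
    (unfold Rmax; repeat destruct Rle_dec; nra).
  assert (E2 : Rmin (Rmin (Rmin (- p) p) 0) 0 ^ 2 = p ^ 2) by
    (unfold Rmin; repeat destruct Rle_dec; nra).
  rewrite E1, E2.
  destruct (Rle_dec 0 q).
  - replace (Rmax (- q) 0) with 0 by (unfold Rmax; destruct Rle_dec; lra).
    replace (Rmin (- q) 0) with (- q) by (unfold Rmin; destruct Rle_dec; lra).
    rewrite Rmult_0_r, cbrt_0.
    replace (p ^ 2 * - q) with (- (p^2 * q)) by ring. rewrite cbrt_opp. ring.
  - replace (Rmax (- q) 0) with (- q) by (unfold Rmax; destruct Rle_dec; lra).
    replace (Rmin (- q) 0) with 0 by (unfold Rmin; destruct Rle_dec; lra).
    rewrite Rmult_0_r, cbrt_0.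
    replace (p ^ 2 * - q) with (- (p^2 * q)) by ring. rewrite cbrt_opp. ring.
Qed.

Lemma taylor1 f a b : a < b -> smooth f ->
  exists z, a < z < b /\ f b = f a + (b - a) * Derive f z.
Proof.
  intros Hab Hs. destruct (Taylor_Lagrange f 0 a b Hab (fun t _ k _ => Hs k t)) as [z [Hz E]].
  exists z. split; auto. rewrite E. simpl. change (fun x : R => f x) with f. field.
Qed.

Lemma taylor2 f a b : a < b -> smooth f ->
  exists z, a < z < b /\
    f b = f a + (b - a) * Derive f a + (b - a) ^ 2 / 2 * Derive_n f 2 z.
Proof.
  intros Hab Hs. destruct (Taylor_Lagrange f 1 a b Hab (fun t _ k _ => Hs k t)) as [z [Hz E]].
  exists z. split; auto. rewrite E. simpl. change (fun x : R => f x) with f. field.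
Qed.

Lemma cont_ed f x : ex_derive f x -> forall eta, 0 < eta -> exists d, 0 < d /\
  forall z, Rabs (z - x) < d -> Rabs (f z - f x) < eta.
Proof.
  intros Hd eta He.
  pose proof (ex_derive_continuous f x Hd) as Hc.
  apply continuity_pt_filterlim in Hc.
  destruct (Hc eta He) as [d [Hdp Hd']].
  exists d. split; auto. intros z Hz.
  destruct (Req_dec z x) as [->|Hne].
  - unfold Rminus. rewrite Rplus_opp_r, Rabs_R0. auto.
  - apply (Hd' z). split; [split; [exact I | intro Hx; apply Hne; auto]|]. simpl. unfold R_dist. auto.
Qed.

Theorem mainTheorem5 :
  elliptic minus_F1De /\ consistent minus_F1De minus_F1D.
Proof.
  split.
  - intros h x r s v w Hh Hrs Hvw.
    pose proof (Hvw 1%Z) as H1. pose proof (Hvw (-1)%Z) as H2.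
    replace (x + IZR 1 * h) with (x + h) in H1 by ring.
    replace (x + IZR (-1) * h) with (x - h) in H2 by ring.
    change (G (v (x + h) / h) (v (x - h) / h) ((v (x + h) + v (x - h)) / (h * h)) <=
            G (w (x + h) / h) (w (x - h) / h) ((w (x + h) + w (x - h)) / (h * h))).
    assert (0 < / h) by (apply Rinv_0_lt_compat; auto).
    assert (0 < / (h * h)) by (apply Rinv_0_lt_compat; nra).
    apply G_mono; unfold Rdiv; apply Rmult_le_compat_r; lra.
  - intros phi Hs x eps Heps.
    set (p := Derive phi x). set (q := Derive_n phi 2 x).
    destruct (G_cont (- p) p (- q) eps Heps) as [d [Hd HG]].
    destruct (cont_ed (Derive_n phi 1) x (Hs 2%nat x) d Hd) as [d1 [Hd1 C1]].
    destruct (cont_ed (Derive_n phi 2) x (Hs 3%nat x) (d/3) ltac:(lra)) as [d2 [Hd2 C2]].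
    exists (Rmin d1 d2 / 2). split.
    { assert (0 < Rmin d1 d2) by (apply Rmin_glb_lt; auto). lra. }
    intros h y Hh Hhd Hy.
    assert (Rmin d1 d2 <= d1) by apply Rmin_l.
    assert (Rmin d1 d2 <= d2) by apply Rmin_r.
    pose proof (Rabs_def2 _ _ Hy) as [Hy1 Hy2].
    destruct (taylor1 phi y (y + h) ltac:(lra) Hs) as [z1 [Hz1 E1]].
    destruct (taylor1 phi (y - h) y ltac:(lra) Hs) as [z2 [Hz2 E2]].
    destruct (taylor2 phi (y - h) y ltac:(lra) Hs) as [z3 [Hz3 E3]].
    destruct (taylor2 phi (y - h) (y + h) ltac:(lra) Hs) as [z4 [Hz4 E4]].
    unfold minus_F1D. fold p q.
    rewrite <- G_limit.
    change (Rabs (G ((phi y - phi (y + h)) / h) ((phi y - phi (y - h)) / h)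
       ((phi y - phi (y + h) + (phi y - phi (y - h))) / (h * h)) - G (- p) p (- q)) < eps).
    assert (M1 : (phi y - phi (y + h)) / h = - Derive phi z1).
    { rewrite E1. field. lra. }
    assert (M2 : (phi y - phi (y - h)) / h = Derive phi z2).
    { rewrite E2. field. lra. }
    assert (M3 : (phi y - phi (y + h) + (phi y - phi (y - h))) / (h * h)
                 = Derive_n phi 2 z3 - 2 * Derive_n phi 2 z4).
    { rewrite E4. rewrite E3. field. lra. }
    rewrite M1, M2, M3.
    assert (K1 : Rabs (Derive_n phi 1 z1 - Derive_n phi 1 x) < d) by (apply C1; apply Rabs_def1; lra).
    assert (K2 : Rabs (Derive_n phi 1 z2 - Derive_n phi 1 x) < d) by (apply C1; apply Rabs_def1; lra).
    assert (K3 : Rabs (Derive_n phi 2 z3 - Derive_n phi 2 x) < d/3) by (apply C2; apply Rabs_def1; lra).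
    assert (K4 : Rabs (Derive_n phi 2 z4 - Derive_n phi 2 x) < d/3) by (apply C2; apply Rabs_def1; lra).
    change (Derive_n phi 1) with (Derive phi) in K1, K2.
    fold p q in K1, K2, K3, K4.
    apply HG.
    + apply Rabs_def2 in K1. apply Rabs_def1; lra.
    + auto.
    + apply Rabs_def2 in K3. apply Rabs_def2 in K4. destruct K3, K4. apply Rabs_def1; lra.
Qed.
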